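(* Let $\mu$ be a Borel probability measure on $\mathbb{R}^d$ with $\operatorname{spt}(\mu)\subseteq[0,1]^d$. If $\mathcal{Z}(\mu)\neq\emptyset$, then $\operatorname{spt}(\mu)\subseteq[0,1]^d\setminus(0,1)^d$.
   Context: $\operatorname{spt}(\mu)$ is the support of $\mu$ (smallest closed set of full measure). $\widehat{\mu}(\xi)=\int e^{-2\pi i\xi\cdot x}d\mu(x)$ and $\mathcal{Z}(\mu)=\{\xi\in\mathbb{R}^d:\widehat{\mu}(\xi+k)=0\text{ for all }k\in\mathbb{Z}^d\}$. *)

(* Defs.v *)
From HB Require Import structures.
From mathcomp Require Import all_boot all_order all_algebra.
From mathcomp Require Import all_classical all_reals all_analysis.
From mathcomp Require Import complex.
Set Implicit Arguments. Unset Strict Implicit. Unset Printing Implicit Defensive.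
Import Order.TTheory GRing.Theory Num.Theory.
Import numFieldNormedType.Exports.
Local Open Scope classical_set_scope.
Local Open Scope ring_scope.

(* R^d is 'rV[R]_d (row vectors, with their usual topology).  The Borel
   sigma-algebra on R^d is the sigma-algebra generated by its open sets. *)
Notation borelRd R d := (g_sigma_algebraType (@open 'rV[R%type]_d)).

Definition dotRd (R : realType) (d : nat) (xi x : 'rV[R]_d) : R :=
  \sum_(i < d) xi ord0 i * x ord0 i.

Definition spt (R : realType) (d : nat)
  (mu : probability (borelRd R d) R) : set 'rV[R]_d :=
  \bigcap_(C in [set C : set 'rV[R]_d | closed C /\
                  mu (~` C : set (borelRd R d)) = 0%E]) C.

(* Fourier transform  mu^(xi) = \int e^{-2 pi i xi.x} dmu(x)
   = \int cos(2 pi xi.x) dmu - i \int sin(2 pi xi.x) dmu. *)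
Definition fourier (R : realType) (d : nat)
  (mu : probability (borelRd R d) R) (xi : 'rV[R]_d) : R[i] :=
  Complex (Rintegral mu setT (fun x : borelRd R d => cos (2 * pi * dotRd xi x)))
          (- Rintegral mu setT (fun x : borelRd R d => sin (2 * pi * dotRd xi x))).

Definition Zset (R : realType) (d : nat)
  (mu : probability (borelRd R d) R) : set 'rV[R]_d :=
  [set xi | forall k : 'rV[int]_d,
     fourier mu (xi + map_mx (fun z : int => z%:~R) k) = 0].

Definition closed_cube (R : realType) (d : nat) : set 'rV[R]_d :=
  [set x | forall i : 'I_d, 0 <= x ord0 i <= 1].
Definition open_cube (R : realType) (d : nat) : set 'rV[R]_d :=
  [set x | forall i : 'I_d, 0 < x ord0 i < 1].
Arguments closed_cube R d : clear implicits.
Arguments open_cube R d : clear implicits.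

(* Main.v *)
Require Import Defs.
From HB Require Import structures.
From mathcomp Require Import all_boot all_order all_algebra.
From mathcomp Require Import all_classical all_reals all_analysis.
From mathcomp Require Import complex.
From mathcomp Require Import ring lra.
Import Order.TTheory GRing.Theory Num.Theory.
Import numFieldNormedType.Exports.
Local Open Scope classical_set_scope.
Local Open Scope ring_scope.
Set Implicit Arguments. Unset Strict Implicit.
Lemma cont_meas (R : realType) d (f : 'rV[R]_d -> R) : continuous f ->
  measurable_fun (setT : set (borelRd R d)) f.
Proof.
move=> cf; apply: (measurability _ (measurable_realfun.RGenOpens.measurableE R)).
move=> _ [_ [a [b ->] <-]].
rewrite setTI; apply: sub_sigma_algebra; apply: open_comp.
  by move=> x _; apply: cf.
exact: interval_open.
Qed.

Lemma cont_int (R : realType) d (mu : probability (borelRd R d) R)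
  (f : 'rV[R]_d -> R) (M : R) : continuous f -> (forall x, `|f x| <= M) ->
  mu.-integrable (setT : set (borelRd R d)) (EFin \o f).
Proof.
move=> cf fM; apply: measurable_bounded_integrable => //.
- by rewrite -[X in (X < _)%E]/(mu setT) probability_setT ltry.
- exact: cont_meas.
- exists M; split; first by rewrite num_real.
  move=> y My x _ /=; apply: le_trans (fM x) _; exact: ltW.
Qed.

Lemma contD (R : realType) d (f g : 'rV[R]_d -> R) :
  continuous f -> continuous g -> continuous (fun x => f x + g x).
Proof. by move=> cf cg x; exact: (cvgD (cf x) (cg x)). Qed.

Lemma contM (R : realType) d (f g : 'rV[R]_d -> R) :
  continuous f -> continuous g -> continuous (fun x => f x * g x).
Proof. by move=> cf cg x; exact: (cvgM (cf x) (cg x)). Qed.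

Lemma contC (R : realType) d (c : R) : continuous (fun _ : 'rV[R]_d => c).
Proof. exact: cst_continuous. Qed.

Lemma contcos (R : realType) d (f : 'rV[R]_d -> R) :
  continuous f -> continuous (fun x => cos (f x)).
Proof. by move=> cf x; apply: continuous_comp; [exact: cf|exact: continuous_cos]. Qed.

Lemma contsin (R : realType) d (f : 'rV[R]_d -> R) :
  continuous f -> continuous (fun x => sin (f x)).
Proof. by move=> cf x; apply: continuous_comp; [exact: cf|exact: continuous_sin]. Qed.

Lemma contsum (R : realType) d (I : Type) (s : seq I) (F : I -> 'rV[R]_d -> R) :
  (forall i, continuous (F i)) -> continuous (fun x => \sum_(i <- s) F i x).
Proof.
move=> cF; elim: s => [|i s IH].
  by under eq_fun do rewrite big_nil; exact: contC.
by under eq_fun do rewrite big_cons; exact: contD.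
Qed.

Lemma contprod (R : realType) d (I : Type) (s : seq I) (F : I -> 'rV[R]_d -> R) :
  (forall i, continuous (F i)) -> continuous (fun x => \prod_(i <- s) F i x).
Proof.
move=> cF; elim: s => [|i s IH].
  by under eq_fun do rewrite big_nil; exact: contC.
by under eq_fun do rewrite big_cons; exact: contM.
Qed.

Lemma contcoord (R : realType) d (j : 'I_d) : continuous (fun x : 'rV[R]_d => x ord0 j).
Proof. exact: coord_continuous. Qed.

Lemma contdot (R : realType) d (v : 'rV[R]_d) : continuous (dotRd v).
Proof.
rewrite /dotRd; apply: contsum => i; apply: contM; [exact: contC|exact: contcoord].
Qed.

Lemma dotD (R : realType) d (u v x : 'rV[R]_d) :
  dotRd (u + v) x = dotRd u x + dotRd v x.
Proof. by rewrite /dotRd -big_split /=; apply: eq_bigr => i _; rewrite mxE mulrDl. Qed.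

Lemma dotN (R : realType) d (u x : 'rV[R]_d) :
  dotRd (- u) x = - dotRd u x.
Proof. by rewrite /dotRd -sumrN; apply: eq_bigr => i _; rewrite mxE mulNr. Qed.

Lemma dotBr (R : realType) d (u x y : 'rV[R]_d) :
  dotRd u (x - y) = dotRd u x - dotRd u y.
Proof. by rewrite /dotRd -sumrB; apply: eq_bigr => i _; rewrite !mxE mulrBr. Qed.

Definition intv (R : realType) d (k : 'rV[int]_d) : 'rV[R]_d :=
  map_mx (fun z : int => z%:~R) k.
Arguments intv R {d} k.

Lemma intvD (R : realType) d (k l : 'rV[int]_d) : intv R (k + l) = intv R k + intv R l.
Proof. by apply/rowP => j; rewrite !mxE intrD. Qed.

Lemma intvN (R : realType) d (k : 'rV[int]_d) : intv R (- k) = - intv R k.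
Proof. by apply/rowP => j; rewrite !mxE intrN. Qed.

Lemma intv0 (R : realType) d : intv R (0 : 'rV[int]_d) = 0.
Proof. by apply/rowP => j; rewrite !mxE. Qed.

Lemma dot_delta (R : realType) d (j : 'I_d) (x : 'rV[R]_d) :
  dotRd (intv R (delta_mx 0 j)) x = x ord0 j.
Proof.
rewrite /dotRd (bigD1 j) //= big1 ?addr0.
  by rewrite !mxE !eqxx /= mul1r.
by move=> i ij; rewrite !mxE (negbTE ij) andbF mul0r.
Qed.

Lemma Zset_cos (R : realType) d (mu : probability (borelRd R d) R) (xi : 'rV[R]_d) :
  Zset mu xi -> forall (k : 'rV[int]_d) (th : R),
  Rintegral mu setT (fun x : borelRd R d => cos (2 * pi * dotRd (xi + intv R k) x + th)) = 0.
Proof.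
move=> Z k th; have := Z k; rewrite /fourier => /eqP; rewrite eq_complex /=.
move=> /andP[/eqP hc /eqP hs]; move/(congr1 -%R): hs; rewrite opprK oppr0 => hs.
rewrite -/(intv R k) in hc hs.
have ic : mu.-integrable (setT : set (borelRd R d))
   (EFin \o (fun x => cos (2 * pi * dotRd (xi + intv R k) x) * cos th)).
  apply: (@cont_int _ _ _ _ 1).
    apply: contM; last exact: contC.
    apply: contcos; apply: contM; [exact: contC|exact: contdot].
  by move=> x; rewrite normrM (le_trans (ler_wpM2l _ (cos_max _))) ?mulr1 ?cos_max.
have is_ : mu.-integrable (setT : set (borelRd R d))
   (EFin \o (fun x => sin (2 * pi * dotRd (xi + intv R k) x) * sin th)).
  apply: (@cont_int _ _ _ _ 1).
    apply: contM; last exact: contC.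
    apply: contsin; apply: contM; [exact: contC|exact: contdot].
  by move=> x; rewrite normrM (le_trans (ler_wpM2l _ (sin_max _))) ?mulr1 ?sin_max.
under eq_Rintegral do rewrite cosD.
rewrite RintegralB //.
have ic0 : mu.-integrable (setT : set (borelRd R d))
   (EFin \o (fun x => cos (2 * pi * dotRd (xi + intv R k) x))).
  apply: (@cont_int _ _ _ _ 1); last by move=> x; exact: cos_max.
  apply: contcos; apply: contM; [exact: contC|exact: contdot].
have is0 : mu.-integrable (setT : set (borelRd R d))
   (EFin \o (fun x => sin (2 * pi * dotRd (xi + intv R k) x))).
  apply: (@cont_int _ _ _ _ 1); last by move=> x; exact: sin_max.
  apply: contsin; apply: contM; [exact: contC|exact: contdot].
rewrite RintegralZr // hc mul0r RintegralZr // hs mul0r subr0 //.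
Qed.

Inductive good (R : realType) d (xi : 'rV[R]_d) : ('rV[R]_d -> R) -> Prop :=
| good0 : good xi (fun _ => 0)
| goodS (k : 'rV[int]_d) (c th : R) (g : 'rV[R]_d -> R) : good xi g ->
    good xi (fun x => c * cos (2 * pi * dotRd (xi + intv R k) x + th) + g x).


Lemma good_ext (R : realType) d (xi : 'rV[R]_d) g h :
  good xi g -> (forall x, g x = h x) -> good xi h.
Proof. by move=> gg e; have -> : h = g by apply/funext => x; rewrite e. Qed.

Lemma good_add (R : realType) d (xi : 'rV[R]_d) g h :
  good xi g -> good xi h -> good xi (fun x => g x + h x).
Proof.
move=> gg gh; elim: gg => [|k c th g' _ IH].
  by apply: good_ext gh _ => x; rewrite add0r.
by apply: good_ext (goodS k c th IH) _ => x; rewrite addrA.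
Qed.

Lemma good_scale (R : realType) d (xi : 'rV[R]_d) g a :
  good xi g -> good xi (fun x => a * g x).
Proof.
elim => [|k c th g' _ IH].
  by apply: good_ext (good0 xi) _ => x; rewrite mulr0.
by apply: good_ext (goodS k (a * c) th IH) _ => x; ring.
Qed.

Lemma good_mulcos (R : realType) d (xi : 'rV[R]_d) g (l : 'rV[int]_d) (ph : R) :
  good xi g -> good xi (fun x => g x * cos (2 * pi * dotRd (intv R l) x + ph)).
Proof.
elim => [|k c th g' _ IH].
  by apply: good_ext (good0 xi) _ => x; rewrite mul0r.
apply: good_ext (goodS (k + l) (c / 2) (th + ph) (goodS (k - l) (c / 2) (th - ph) IH)) _.
move=> x.
have eP : 2 * pi * dotRd (xi + intv R (k + l)) x + (th + ph) =
  (2 * pi * dotRd (xi + intv R k) x + th) + (2 * pi * dotRd (intv R l) x + ph).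
  by rewrite intvD (addrA xi) (dotD (xi + intv R k) (intv R l) x); ring.
have eM : 2 * pi * dotRd (xi + intv R (k - l)) x + (th - ph) =
  (2 * pi * dotRd (xi + intv R k) x + th) - (2 * pi * dotRd (intv R l) x + ph).
  by rewrite intvD intvN (addrA xi) (dotD (xi + intv R k) (- intv R l) x) dotN; ring.
rewrite eP eM (cosD (2 * pi * dotRd (xi + intv R k) x + th) (2 * pi * dotRd (intv R l) x + ph)).
rewrite (cosB (2 * pi * dotRd (xi + intv R k) x + th) (2 * pi * dotRd (intv R l) x + ph)); by field.
Qed.

Lemma good_cb (R : realType) d (xi : 'rV[R]_d) g :
  good xi g -> continuous g /\ exists M, forall x, `|g x| <= M.
Proof.
elim => [|k c th g' _ [cg [M gM]]].
  by split; [exact: contC| exists 0 => x; rewrite normr0].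
split.
  apply: contD => //; apply: contM; first exact: contC.
  apply: contcos; apply: contD; last exact: contC.
  apply: contM; [exact: contC|exact: contdot].
exists (`|c| + M) => x; rewrite (le_trans (ler_normD _ _)) // lerD //.
by rewrite normrM -[leRHS]mulr1 ler_wpM2l // cos_max.
Qed.

Lemma good_int (R : realType) d (mu : probability (borelRd R d) R) (xi : 'rV[R]_d) g :
  Zset mu xi -> good xi g -> Rintegral mu setT (g : borelRd R d -> R) = 0.
Proof.
move=> Z; elim => [|k c th g' gg' IH].
  by rewrite Rintegral_cst // mul0r.
have [cg [M gM]] := good_cb gg'.
rewrite RintegralD //.
- rewrite RintegralZl //; first by rewrite Zset_cos // mulr0 IH addr0.
  apply: (@cont_int _ _ _ _ 1); last by move=> x; exact: cos_max.
  apply: contcos; apply: contD; last exact: contC.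
  apply: contM; [exact: contC|exact: contdot].
- apply: (@cont_int _ _ _ _ `|c|).
    apply: contM; first exact: contC.
    apply: contcos; apply: contD; last exact: contC.
    apply: contM; [exact: contC|exact: contdot].
  by move=> x; rewrite normrM -[leRHS]mulr1 ler_wpM2l // cos_max.
- exact: (@cont_int _ _ _ _ M).
Qed.

Definition mj (R : realType) d (a : 'rV[R]_d) (j : 'I_d) (x : 'rV[R]_d) : R :=
  (1 + cos (2 * pi * dotRd (intv R (delta_mx 0 j)) x + - (2 * pi * a ord0 j))) / 2.

Definition qf (R : realType) d (a : 'rV[R]_d) (x : 'rV[R]_d) : R :=
  \prod_(j < d) mj a j x.

Lemma good_mulm (R : realType) d (xi a : 'rV[R]_d) g j :
  good xi g -> good xi (fun x => g x * mj a j x).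
Proof.
move=> gg.
have h := good_add (good_scale (1/2) gg)
  (good_scale (1/2) (good_mulcos (delta_mx 0 j) (- (2 * pi * a ord0 j)) gg)).
by apply: good_ext h _ => x; rewrite /mj; field.
Qed.

Lemma good_mulprod (R : realType) d (xi a : 'rV[R]_d) g (s : seq 'I_d) :
  good xi g -> good xi (fun x => g x * \prod_(j <- s) mj a j x).
Proof.
elim: s g => [|j s IH] g gg.
  by apply: good_ext gg _ => x; rewrite big_nil mulr1.
have := IH _ (good_mulm a j gg).
by move=> h; apply: good_ext h _ => x; rewrite big_cons mulrA.
Qed.

Lemma good_pow (R : realType) d (xi a : 'rV[R]_d) g (N : nat) :
  good xi g -> good xi (fun x => g x * qf a x ^+ N).
Proof.
move=> gg; elim: N => [|N IH].
  by apply: good_ext gg _ => x; rewrite expr0 mulr1.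
have := good_mulprod a (index_enum 'I_d) IH.
by move=> h; apply: good_ext h _ => x; rewrite exprS /qf; ring.
Qed.

Lemma main_int (R : realType) d (mu : probability (borelRd R d) R) (xi a : 'rV[R]_d) (N : nat) :
  Zset mu xi ->
  Rintegral mu setT (fun x : borelRd R d => cos (2 * pi * dotRd xi (x - a)) * qf a x ^+ N) = 0.
Proof.
move=> Z; apply: good_int Z _.
have g0 : good xi (fun x => cos (2 * pi * dotRd xi x - 2 * pi * dotRd xi a)).
  apply: good_ext (goodS 0 1 (- (2 * pi * dotRd xi a)) (good0 xi)) _ => x.
  by rewrite intv0 addr0 mul1r addr0.
apply: good_ext (good_pow a N g0) _ => x.
by rewrite dotBr mulrBr.
Qed.

Lemma mjE (R : realType) d (a x : 'rV[R]_d) j :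
  mj a j x = (1 + cos (2 * pi * (x ord0 j - a ord0 j))) / 2.
Proof. by rewrite /mj dot_delta mulrBr. Qed.

Lemma mj01 (R : realType) d (a x : 'rV[R]_d) j : 0 <= mj a j x <= 1.
Proof.
rewrite mjE; have := cos_geN1 (2 * pi * (x ord0 j - a ord0 j)).
have := cos_le1 (2 * pi * (x ord0 j - a ord0 j)). lra.
Qed.

Lemma qf01 (R : realType) d (a x : 'rV[R]_d) : 0 <= qf a x <= 1.
Proof.
apply/andP; split; first by apply: prodr_ge0 => j _; case/andP: (mj01 a x j).
by apply: prodr_ile1 => j _; exact: mj01.
Qed.

Lemma qfa (R : realType) d (a : 'rV[R]_d) : qf a a = 1.
Proof. by rewrite /qf big1 // => j _; rewrite mjE subrr mulr0 cos0; field. Qed.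

Lemma qf_cont (R : realType) d (a : 'rV[R]_d) : continuous (qf a).
Proof.
rewrite /qf; apply: contprod => j; rewrite /mj.
apply: contM; last exact: contC.
apply: contD; first exact: contC.
apply: contcos; apply: contD; last exact: contC.
apply: contM; [exact: contC|exact: contdot].
Qed.

Lemma cos_bound (R : realType) (del u : R) : 0 <= del -> del <= u -> u <= 1 - del ->
  cos (2 * pi * u) <= cos (2 * pi * del).
Proof.
move=> d0 du u1.
have pi0 := pi_gt0 R.
have key : forall v, del <= v -> v <= 1/2 -> cos (2 * pi * v) <= cos (2 * pi * del).
  move=> v dv v2.
  have iv : 2 * pi * v \in `[0, pi] by rewrite in_itv /=; apply/andP; split; nra.
  have id : 2 * pi * del \in `[0, pi] by rewrite in_itv /=; apply/andP; split; nra.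
  rewrite leNgt (ltr_cos iv id) -leNgt; nra.
have [u2|u2] := leP u (1/2); first exact: key.
have -> : cos (2 * pi * u) = cos (2 * pi * (1 - u)).
  rewrite -(cosN (2 * pi * (1 - u))) -(cosD2pi (- (2 * pi * (1 - u)))); congr cos.
  by rewrite mulr2n; ring.
apply: key; lra.
Qed.

Lemma qf_le (R : realType) d (a x : 'rV[R]_d) (del : R) (j : 'I_d) :
  0 <= del -> del <= a ord0 j -> a ord0 j <= 1 - del ->
  0 <= x ord0 j <= 1 -> del <= `|x ord0 j - a ord0 j| ->
  qf a x <= (1 + cos (2 * pi * del)) / 2.
Proof.
move=> d0 da ad /andP[x0 x1] dx.
rewrite /qf (bigD1 j) //=.
apply: (@le_trans _ _ (mj a j x)).
  apply: ler_piMr; first by case/andP: (mj01 a x j).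
  by apply: prodr_ile1 => i _; exact: mj01.
rewrite mjE ler_pM2r ?invr_gt0 // lerD2l.
have pi0 := pi_gt0 R.
rewrite -cos_norm normrM (ger0_norm (_ : 0 <= 2 * pi)); last by rewrite mulr_ge0 // ltW.
apply: cos_bound => //.
rewrite ler_norml; apply/andP; split; lra.
Qed.

Lemma B_lt1 (R : realType) (del : R) : 0 < del -> del <= 1/2 ->
  (1 + cos (2 * pi * del)) / 2 < 1.
Proof.
move=> d0 d2; have pi0 := pi_gt0 R.
suff : cos (2 * pi * del) < 1 by lra.
have iv : 2 * pi * del \in `[0, pi] by rewrite in_itv /=; apply/andP; split; nra.
have i0 : (0 : R) \in `[0, pi] by rewrite in_itv /= lexx ltW.
by rewrite -[X in _ < X]cos0 (ltr_cos i0 iv); nra.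
Qed.

Lemma ball_coord (R : realType) d (a x : 'rV[R]_d) e :
  ball a e x -> forall j, `|a ord0 j - x ord0 j| < e.
Proof. by move=> [] /= e0 h j; have := h ord0 j. Qed.

Lemma not_ball (R : realType) d (a x : 'rV[R]_d) e : 0 < e ->
  ~ ball a e x -> exists j, e <= `|a ord0 j - x ord0 j|.
Proof.
move=> e0 nb; have [//|h] := pselect (exists j, e <= `|a ord0 j - x ord0 j|).
apply: False_ind; apply: nb; split => //= i j.
rewrite (ord1 i) /ball /= ltNge; apply/negP => hj; apply: h; by exists j.
Qed.

Definition cen (R : realType) d (np : nat * 'rV[int]_d) : 'rV[R]_d :=
  \row_j ((np.2 ord0 j)%:~R / (np.1.+1)%:R).
Definition rad (R : realType) d (np : nat * 'rV[int]_d) : R := ((np.1.+1)%:R)^-1.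

Lemma null_outside (R : realType) d (mu : probability (borelRd R d) R) (S : set 'rV[R]_d) :
  spt mu `<=` S -> mu.-negligible (~` S : set (borelRd R d)).
Proof.
move=> sptS.
pose B (np : nat * 'rV[int]_d) : set (borelRd R d) := ball (cen R np) (rad R np).
pose F (k : nat) : set (borelRd R d) := [set y | exists np, unpickle k = Some np /\
   mu.-negligible (B np) /\ B np y].
have Fn k : mu.-negligible (F k).
  case E: (unpickle k) => [np|].
    have [nB|nB] := pselect (mu.-negligible (B np)).
      by apply: negligibleS nB => y [np' [] ]; rewrite E => -[<-] [].
    apply: negligibleS (negligible_set0 mu) => y [np' [] ]; rewrite E => -[<-] [].
    by move=> /nB.
  by apply: negligibleS (negligible_set0 mu) => y [np' [] ]; rewrite E.
apply: negligibleS (negligible_bigcup Fn) => x nSx.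
have nspt : ~ spt mu x by move=> /sptS.
have [C [[cC mC] nCx]] : exists C : set 'rV[R]_d,
    (closed C /\ mu (~` C : set (borelRd R d)) = 0%E) /\ ~ C x.
  move: nspt; rewrite /spt /bigcap /= => /existsNP [C] /not_implyP h.
  by exists C.
have oC : open (~` C) by exact: closed_openC.
have : nbhs x (~` C) by apply: open_nbhs_nbhs; split.
move=> /nbhs_ballP [e /= e0 eC].
pose n := Num.Def.trunc (2 / e).
have hn : 2 / e < (n.+1)%:R by exact: truncnS_gt.
pose N1 : R := (n.+1)%:R.
have N10 : 0 < N1 by rewrite /N1 ltr0n.
pose u := N1^-1.
have u0 : 0 < u by rewrite invr_gt0.
have uN : u * N1 = 1 by rewrite mulVf // gt_eqF.
have eu : 2 * u < e.
  have : 2 < e * N1 by rewrite mulrC -ltr_pdivrMr.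
  nra.
pose p : 'rV[int]_d := \row_j Num.Def.floor (x ord0 j * N1).
pose np := (n, p).
have xB : B np x.
  split => //= i j; rewrite (ord1 i) /ball /= !mxE.
  rewrite -/N1 -/u.
  set y := x ord0 j * N1.
  have hx : x ord0 j = y * u by rewrite /y -mulrA (mulrC N1) uN mulr1.
  have := floor_itv y; rewrite intrD mulr1z => /andP[f1 f2].
  rewrite hx /rad /= -/N1 -/u ltr_norml; apply/andP; split; nra.
have BC : B np `<=` ~` C.
  move=> y [_ /= hy]; apply: eC; split => //= i j.
  have := hy i j; rewrite /ball /= (ord1 i) => h1.
  have [_ /=] := xB; move/(_ ord0 j); rewrite /ball /= => h2.
  apply: le_lt_trans (ler_distD (cen R np ord0 j) _ _) _.
  rewrite distrC; apply: lt_trans eu; rewrite mulr2n mulrDl mul1r.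
  rewrite /rad /= -/N1 -/u in h1 h2.
  by apply: ltrD; [exact: h2 | exact: h1].
exists (pickle np) => //; exists np; split; first by rewrite pickleK.
split => //.
exists (~` C); split => //.
by apply: sub_sigma_algebra.
Qed.

Lemma geom_zero (R : realType) (m r : R) : 0 <= r -> r < 1 ->
  (forall N, m <= 2 * r ^+ N) -> m <= 0.
Proof.
move=> r0 r1 hm; rewrite leNgt; apply/negP => m0.
have hr : `|r| < 1 by rewrite ger0_norm.
have [i _ hi] := cvg_expr hr (nbhsx_ballx 0 (m / 2) (divr_gt0 m0 (ltr0Sn R 1))).
have := hi i (leqnn i); rewrite /ball /= sub0r normrN ger0_norm ?exprn_ge0 // => h.
have := hm i; lra.
Qed.

Lemma contX (R : realType) d (f : 'rV[R]_d -> R) (N : nat) :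
  continuous f -> continuous (fun x => f x ^+ N).
Proof.
move=> cf; elim: N => [|N IH].
  by under eq_fun do rewrite expr0; exact: contC.
by under eq_fun do rewrite exprS; exact: contM.
Qed.

Lemma cube_null (R : realType) d (mu : probability (borelRd R d) R) (xi a : 'rV[R]_d) :
  Zset mu xi -> spt mu `<=` closed_cube R d -> open_cube R d a -> ~ spt mu a.
Proof.
move=> Z sptS oa.
have [A [mA A0 sA]] := null_outside sptS.
pose D : set (borelRd R d) := ~` A.
have mD : measurable D by exact: measurableC.
have Dcube : forall x, D x -> closed_cube R d x.
  by move=> x Dx; apply: contrapT => nx; exact: Dx (sA x nx).
pose h (x : 'rV[R]_d) := cos (2 * pi * dotRd xi (x - a)).
have hc : continuous h.
  apply: contcos; apply: contM; first exact: contC.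
  have -> : (fun x => dotRd xi (x - a)) = (fun x => dotRd xi x + - dotRd xi a).
    by apply/funext => x; rewrite dotBr.
  by apply: contD; [exact: contdot| exact: contC].
have ha : h a = 1.
  by rewrite /h subrr /dotRd big1 ?mulr0 ?cos0 // => j _; rewrite mxE mulr0.
have [e e0 eh] : exists2 e, 0 < e & forall x, ball a e x -> 1/2 < h x.
  have nb : nbhs a (h @^-1` ball (h a) (1/2)).
    by apply: hc; apply: nbhsx_ballx.
  move/nbhs_ballP: nb => [e e0 he]; exists e => // x /he.
  rewrite /ball /= ha ltr_norml => /andP[h1 h2]; lra.
pose del0 := \big[Order.min/(1/2 : R)]_(j < d) Order.min (a ord0 j) (1 - a ord0 j).
have del0_gt0 : 0 < del0.
  apply: lt_bigmin => [|j _]; first lra.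
  by rewrite lt_min; have /andP[h1 h2] := oa j; apply/andP; split; lra.
have del0_le j : del0 <= Order.min (a ord0 j) (1 - a ord0 j) := bigmin_le _ j _.
pose del := Order.min e (Order.min (1/2) del0).
have del_gt0 : 0 < del by rewrite /del !lt_min e0 del0_gt0 /= andbT; lra.
have del_e : del <= e by rewrite /del ge_min lexx.
have del_d0 : del <= del0 by rewrite /del ge_min [X in _ || X]ge_min lexx !orbT.
have del_2 : del <= 1/2 by rewrite /del ge_min [X in _ || X]ge_min lexx !orbT.
have del_a j : del <= a ord0 j /\ del <= 1 - a ord0 j.
  by have := del0_le j; rewrite le_min => /andP[h1 h2]; split; lra.
pose B := (1 + cos (2 * pi * del)) / 2.
have B1 : B < 1 := B_lt1 del_gt0 del_2.
have B0 : 0 <= B by rewrite /B; have := cos_geN1 (2 * pi * del); lra.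
pose B' := (1 + B) / 2.
have B'1 : B' < 1 by rewrite /B'; lra.
have BB' : B < B' by rewrite /B'; lra.
have B'0 : 0 < B' by rewrite /B'; lra.
pose W : set (borelRd R d) := ball a del `&` (qf a @^-1` `]B', +oo[).
have oW : open W.
  apply: openI; first exact: ball_open.
  apply: open_comp; [by move=> x _; apply: qf_cont | exact: interval_open].
have mW : measurable W by apply: sub_sigma_algebra.
have Wa : W a.
  split; first exact: ballxx.
  by rewrite /= in_itv /= qfa andbT.
suff W0 : mu W = 0%E.
  move=> spta; have : (~` W) a.
    by apply: spta; split; [exact: open_closedC | rewrite setCK].
  by [].
have mDW : measurable (D `&` W) by exact: measurableI.
have mDnW : measurable (D `&` ~` W) by apply: measurableI => //; exact: measurableC.
have finm X : measurable X -> mu X \is a fin_num.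
  move=> mX; rewrite ge0_fin_numE ?measure_ge0 //.
  exact: le_lt_trans (probability_le1 mu mX) (ltry _).
have key N : (B' ^+ N / 2) * fine (mu (D `&` W)) <= B ^+ N.
  pose f := fun x : borelRd R d => h x * qf a x ^+ N.
  have fc : continuous f by apply: contM => //; apply: contX; exact: qf_cont.
  have qN x : 0 <= qf a x ^+ N <= 1.
    have /andP[q0 q1] := qf01 a x.
    by rewrite exprn_ge0 // exprn_ile1.
  have hb x : `|h x| <= 1 by exact: cos_max.
  have fb x : `|f x| <= 1.
    rewrite /f normrM; have /andP[q0 q1] := qN x.
    by rewrite (ger0_norm q0) -[leRHS]mulr1 ler_pM // ?normr_ge0.
  have fi : mu.-integrable (setT : set (borelRd R d)) (EFin \o f) := @cont_int _ _ mu _ 1 fc fb.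
  have i0 : Rintegral mu setT f = 0 := main_int a N Z.
  have eD : Rintegral mu setT f = Rintegral mu D f.
    by rewrite /Rintegral (negligible_integral mA measurableT fi A0) setTD.
  have eS : D = (D `&` W) `|` (D `&` ~` W) by rewrite -setIUr setUv setIT.
  have dj : [disjoint D `&` W & D `&` ~` W].
    by rewrite /disj_set; apply/eqP; apply/seteqP; split => // x [[_ ?] [_ ?]].
  have fiD : mu.-integrable D (EFin \o f) by apply: integrableS fi.
  rewrite eD eS Rintegral_setU // in i0; last by rewrite -eS.
  have ci c : mu.-integrable (setT : set (borelRd R d)) (EFin \o (fun=> c)).
    by apply: (@cont_int _ _ _ _ `|c|); [exact: contC | move=> x].
  have l1 : (B' ^+ N / 2) * fine (mu (D `&` W)) <= Rintegral mu (D `&` W) f.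
    rewrite -Rintegral_cst //; apply: le_Rintegral => //.
    - by apply: integrableS (ci _).
    - by apply: integrableS fi.
    move=> x [Dx [bx qx]]; move: qx; rewrite /= in_itv /= andbT => qx.
    have hx : 1/2 < h x by apply: eh; exact: le_ball bx.
    have p1 : B' ^+ N <= qf a x ^+ N.
      by apply: lerXn2r; [rewrite nnegrE ltW | rewrite nnegrE; case/andP: (qf01 a x) | exact: ltW].
    have p0 : 0 <= B' ^+ N by rewrite exprn_ge0 // ltW.
    rewrite /f; nra.
  have l2 : - B ^+ N * fine (mu (D `&` ~` W)) <= Rintegral mu (D `&` ~` W) f.
    rewrite -Rintegral_cst //; apply: le_Rintegral => //.
    - by apply: integrableS (ci _).
    - by apply: integrableS fi.
    move=> x [Dx nWx]; rewrite /f.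
    have BN0 : 0 <= B ^+ N by rewrite exprn_ge0.
    have [bx|nbx] := pselect (ball a del x).
      have hx : 1/2 < h x by apply: eh; exact: le_ball bx.
      have /andP[q0 _] := qN x.
      nra.
    have [j hj] := not_ball del_gt0 nbx.
    have cx := Dcube x Dx.
    have qB : qf a x <= B.
      have [d1 d2] := del_a j.
      have d3 : a ord0 j <= 1 - del by lra.
      by apply: (@qf_le _ _ a x del j (ltW del_gt0) d1 d3 (cx j)); rewrite distrC.
    have qNB : qf a x ^+ N <= B ^+ N.
      by apply: lerXn2r; rewrite ?nnegrE //; case/andP: (qf01 a x).
    have := hb x; rewrite ler_norml => /andP[h1 h2].
    have /andP[q0 _] := qN x.
    nra.
  have m1 : fine (mu (D `&` ~` W)) <= 1.
    have := probability_le1 mu mDnW; rewrite -(fineK (finm _ mDnW)) lee_fin //.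
  have m2 : 0 <= fine (mu (D `&` ~` W)) by apply: fine_ge0; exact: measure_ge0.
  have BN0 : 0 <= B ^+ N by rewrite exprn_ge0.
  nra.
have mle : fine (mu (D `&` W)) <= 0.
  apply: (@geom_zero _ _ (B / B')).
  - by rewrite divr_ge0 // ltW.
  - by rewrite ltr_pdivrMr // mul1r.
  move=> N; have k := key N.
  have pB : 0 < B' ^+ N by rewrite exprn_gt0.
  rewrite expr_div_n mulrA ler_pdivlMr //.
  nra.
have mDW0 : mu (D `&` W) = 0%E.
  rewrite -(fineK (finm _ mDW)); congr EFin.
  by apply/eqP; rewrite eq_le mle fine_ge0 // measure_ge0.
apply/eqP; rewrite eq_le measure_ge0 andbT.
apply: (@le_trans _ _ (mu ((D `&` W) `|` A))).
  apply: le_measure; rewrite ?inE //; first exact: measurableU.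
  move=> x Wx; have [Ax|nAx] := pselect (A x); [by right | by left].
apply: le_trans (measureU2 mu mDW mA) _.
have e1 : (mu (D `&` W) + mu A = 0)%E by rewrite mDW0 A0 adde0.
by have /eqP := e1; rewrite eq_le => /andP[].
Qed.

Unset Implicit Arguments.

Theorem corollary3p4 (R : realType) (d : nat) (mu : probability (borelRd R d) R) :
  spt mu `<=` closed_cube R d ->
  Zset mu !=set0 ->
  spt mu `<=` closed_cube R d `\` open_cube R d.
Proof.
move=> sptS [xi Z] x sx; split; first exact: sptS.
by move=> ox; exact: (cube_null Z sptS ox sx).
Qed.
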